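(* For each integer $l\ge1$, the sequence $X(l)=(a_j)_{j\ge1}$ with $a_j=\nu_2(A_{l,l+j-1})$ is $s$-simple with $s=2^{1+\nu_2(l)}$.
   Context: $A_{l,m}=\frac{l!\,m!}{2^{m-l}}\sum_{k=l}^{m}2^{k}\binom{2m-2k}{m-k}\binom{m+k}{k}\binom{k}{l}$ for $0\le l\le m$; $\nu_2$ is the $2$-adic valuation. A sequence $(a_j)_{j\ge1}$ has block structure with block length $s\ge2$ if for every $t\ge0$, $a_{st+1}=a_{st+2}=\cdots=a_{s(t+1)}$; it is called $s$-simple if $s$ is the largest block length for which this holds. *)

(* Defs.v *)
From HB Require Import structures.
From mathcomp Require Import all_boot all_order all_algebra.
Set Implicit Arguments. Unset Strict Implicit. Unset Printing Implicit Defensive.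
Import Order.TTheory GRing.Theory Num.Theory.

Definition A (l m : nat) : rat :=
  ((l`! * m`! * \sum_(l <= k < m.+1) 2 ^ k * 'C(2 * m - 2 * k, m - k)
        * 'C(m + k, k) * 'C(k, l))%N)%:R / (2 ^ (m - l))%:R.

(* 2-adic valuation of a rational number (nu2 0 = 0 by convention) *)
Definition nu2 (q : rat) : int :=
  (logn 2 `|numq q|%N)%:Z - (logn 2 `|denq q|%N)%:Z.

Definition block_structure (T : Type) (a : nat -> T) (s : nat) : Prop :=
  (2 <= s)%N /\
  forall t j : nat, (1 <= j <= s)%N -> a (s * t + j)%N = a (s * t + 1)%N.

Definition s_simple (T : Type) (a : nat -> T) (s : nat) : Prop :=
  block_structure a s /\ forall s', block_structure a s' -> (s' <= s)%N.

(* Main.v *)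
From Stdlib Require Import Lia Ring Arith.
Require Import Defs.
From mathcomp Require Import all_boot all_order all_algebra.
Ltac natify := rewrite -?plusE -?multE -?minusE.
Ltac nlia := (try apply/leP); natify; lia.

Lemma mulcan a x y : 0 < a -> a * x = a * y -> x = y.
Proof. by move=> a0 /eqP; rewrite eqn_pmul2l // => /eqP. Qed.

Lemma binA j : (j+1) * 'C(2*j+2, j+1) = 2*(2*j+1) * 'C(2*j, j).
Proof.
have e1 : (2*j+2).-1 = 2*j+1 by rewrite addn2 addn1.
have e2 : (2*j+1).-1 = 2*j by rewrite addn1.
have h1 : (2*j+2)*'C(2*j+1,j) = (j+1)*'C(2*j+2,j+1).
  by have := mul_bin_diag (2*j+2) j; rewrite e1 -[j.+1]addn1.
have h2 : (2*j+1)*'C(2*j,j) = (j+1)*'C(2*j+1,j+1).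
  by have := mul_bin_diag (2*j+1) j; rewrite e2 -[j.+1]addn1.
have h3 : 'C(2*j+1, j+1) = 'C(2*j+1, j).
  rewrite -(@bin_sub (2*j+1) (j+1)); last by nlia.
  congr (binomial _ _); natify; lia.
rewrite h3 in h2.
apply: (@mulcan (j+1)); first by rewrite addn1.
rewrite -h1.
transitivity (2 * ((j+1) * 'C(2*j+1,j)) * (j+1)); first by clear; natify; ring.
rewrite -h2; natify; ring.
Qed.

Lemma binB m k : (m+1) * 'C(m+1+k, k) = (m+1+k) * 'C(m+k, k).
Proof.
have h := mul_bin_down (m+1+k) k.
have e : (m+1+k).-1 = m+k by natify; lia.
rewrite e in h; rewrite h; congr (_ * _); natify; lia.
Qed.

Lemma binC k l : (l+1) * 'C(k, l.+1) = (k-l) * 'C(k, l).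
Proof. by rewrite addn1 mul_bin_left. Qed.

Lemma binD m k : (k+1) * 'C(m+k+1, k+1) = (m+k+1) * 'C(m+k, k).
Proof. by rewrite !addn1 -(mul_bin_diag (m+k).+1 k). Qed.

Lemma binE' k l : (l+1) * 'C(k+1, l+1) = (k+1) * 'C(k, l).
Proof. by rewrite !addn1 -(mul_bin_diag k.+1 l). Qed.

Definition f (l m k : nat) := 2 ^ k * 'C(2 * m - 2 * k, m - k) * 'C(m + k, k) * 'C(k, l).
Definition g (l m k : nat) :=
  2*(m+1)*(l+1) * (2^k * 'C(2*(m+1)-2* k, (m+1)-k) * 'C(m+k,k) * 'C(k,l+1)).

Lemma binC' k l : (l+1) * 'C(k, l+1) = (k-l) * 'C(k, l).
Proof. by rewrite addn1 mul_bin_left. Qed.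

Section PW.
Variables (l i j k m : nat).
Hypotheses (hk : k = l + i) (hm : m = k + j).
Let b := 2^k * 'C(2* j,j) * 'C(m+k,k) * 'C(k,l).

Lemma F0 : f l m k = b.
Proof.
rewrite /f /b.
have -> : 2* m - 2* k = 2* j by subst; nlia.
have -> : m - k = j by subst; nlia.
done.
Qed.

Lemma F1 : (j+1)*(m+1)* f l (m+1) k = 2*(2* j+1)*(m+1+k) * b.
Proof.
rewrite /f /b.
have -> : 2*(m+1) - 2* k = 2* j+2 by subst; nlia.
have -> : (m+1) - k = j+1 by subst; nlia.
transitivity (2^k * 'C(k,l) * ((j+1) * 'C(2* j+2,j+1)) * ((m+1) * 'C(m+1+k,k))).
  by natify; ring.
rewrite binA binB; natify; ring.
Qed.

Lemma F2 : (l+1) * f (l+1) m k = i * b.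
Proof.
rewrite /f /b.
have -> : 2* m - 2* k = 2* j by subst; nlia.
have -> : m - k = j by subst; nlia.
transitivity (2^k * 'C(2* j,j) * 'C(m+k,k) * ((l+1) * 'C(k,l+1))).
  by natify; ring.
rewrite binC'.
have -> : k - l = i by subst; nlia.
natify; ring.
Qed.

Lemma F3 : (j+1) * g l m k = 4*(m+1)*(2* j+1)* i * b.
Proof.
rewrite /g /b.
have -> : 2*(m+1) - 2* k = 2* j+2 by subst; nlia.
have -> : (m+1) - k = j+1 by subst; nlia.
transitivity (2*(m+1)*2^k * 'C(m+k,k) * ((j+1) * 'C(2* j+2,j+1)) * ((l+1) * 'C(k,l+1))).
  by natify; ring.
rewrite binA binC'.
have -> : k - l = i by subst; nlia.
natify; ring.
Qed.

Lemma F4 : g l m (k+1) = 4*(m+1)*(m+k+1) * b.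
Proof.
apply: (@mulcan (k+1)); first by rewrite addn1.
rewrite /g /b.
have -> : 2*(m+1) - 2*(k+1) = 2* j by subst; nlia.
have -> : (m+1) - (k+1) = j by subst; nlia.
have -> : m + (k+1) = m+k+1 by natify; lia.
rewrite expnD expn1.
transitivity (2*(m+1)*2^k*2 * 'C(2* j,j) * ((k+1) * 'C(m+k+1,k+1)) * ((l+1) * 'C(k+1,l+1))).
  by natify; ring.
rewrite binD binE'; natify; ring.
Qed.

Lemma pointwise :
  (i+j+1)*(m+1)* f l (m+1) k + 4* l*(l+1)* f (l+1) m k + g l m (k+1)
  = 2*(m+l+1)*(2* l+4*(i+j)+3) * f l m k + g l m k.
Proof.
apply: (@mulcan ((j+1)*(l+1))); first by rewrite muln_gt0 !addn1.
transitivity ((i+j+1)*(l+1)*((j+1)*(m+1)* f l (m+1) k) + 4* l*(l+1)*(j+1)*((l+1) * f (l+1) m k)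
   + (j+1)*(l+1)*g l m (k+1)).
  by natify; ring.
rewrite F1 F2 F4.
transitivity ((j+1)*(l+1)*(2*(m+l+1)*(2* l+4*(i+j)+3)) * f l m k + (l+1) * ((j+1) * g l m k)).
  2: by natify; ring.
rewrite F3 F0.
subst. natify. ring.
Qed.
End PW.

Lemma pointwise_gen l d k : k <= l + d ->
  (d+1)*(l+d+1)* f l (l+d+1) k + 4* l*(l+1)* f (l+1) (l+d) k + g l (l+d) (k+1)
  = 2*(l+d+l+1)*(2* l+4*d+3) * f l (l+d) k + g l (l+d) k.
Proof.
move=> hkm.
case: (ltnP k l) => hkl.
  have z1 : 'C(k, l) = 0 by rewrite bin_small.
  have z2 : 'C(k, l+1) = 0 by rewrite bin_small // addn1 ltnS ltnW.
  have z3 : 'C(k+1, l+1) = 0 by rewrite bin_small // !addn1 ltnS.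
  by rewrite /f /g z1 z2 z3 !muln0 !addn0.
have hk : k = l + (k - l) by rewrite subnKC.
have hm : l + d = k + (l + d - k) by rewrite subnKC.
have hd : d = (k - l) + (l + d - k) by apply/eqP; rewrite -(eqn_add2l l) addnA -hk -hm.
have := @pointwise l (k - l) (l + d - k) k (l + d) hk hm.
by rewrite -hd.
Qed.

Lemma f_small l m k : k < l -> f l m k = 0.
Proof. by move=> h; rewrite /f (bin_small h) muln0. Qed.

Lemma S_eq l m : l <= m.+1 ->
  \sum_(l <= k < m.+1) f l m k = \sum_(0 <= k < m.+1) f l m k.
Proof.
move=> h; rewrite (@big_cat_nat _ _ _ l 0 m.+1) //=.
have -> : \sum_(0 <= k < l) f l m k = 0.
  rewrite big_nat_cond big1 // => k /andP [/andP [_ hk] _].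
  exact: f_small.
by rewrite add0n.
Qed.

Lemma bin2m m : 'C(2* m+2, m+1) = 2 * 'C(2* m+1, m+1).
Proof.
have -> : 2* m+2 = (2* m+1).+1 by rewrite addn1 addn2.
rewrite [m+1]addn1 binS.
have -> : 'C(2* m+1, m) = 'C(2* m+1, m.+1).
  rewrite -(@bin_sub (2* m+1) m.+1); last by nlia.
  congr (binomial _ _); natify; lia.
by natify; lia.
Qed.

Lemma last_term l d (m := l + d) : (d+1)*(m+1) * f l (m+1) (m+1) = g l m (m+1).
Proof.
rewrite /f /g !subnn !bin0 !muln1.
have -> : m + 1 + (m+1) = 2* m+2 by natify; lia.
have -> : m + (m+1) = 2* m+1 by natify; lia.
rewrite bin2m.
have e : (l+1) * 'C(m+1, l+1) = (d+1) * 'C(m+1, l).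
  rewrite binC'; congr (_ * _); rewrite /m; natify; lia.
transitivity (2 * (m+1) * 2^(m+1) * 'C(2* m+1,m+1) * ((d+1) * 'C(m+1, l))).
  by natify; ring.
rewrite -e /m; natify; ring.
Qed.

Lemma g0 l m : g l m 0 = 0.
Proof. by rewrite /g (@bin_small 0 (l+1)) ?muln0 // addn1. Qed.

Lemma Srec l d :
  (d+1)*(l+d+1)* \sum_(0 <= k < (l+d+1).+1) f l (l+d+1) k
  + 4* l*(l+1)* \sum_(0 <= k < (l+d).+1) f (l+1) (l+d) k
  = 2*(l+d+l+1)*(2* l+4*d+3) * \sum_(0 <= k < (l+d).+1) f l (l+d) k.
Proof.
set m := l + d.
have P : \sum_(0 <= k < m.+1) ((d+1)*(m+1)* f l (m+1) k + 4* l*(l+1)* f (l+1) m k + g l m k.+1)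
       = \sum_(0 <= k < m.+1) (2*(m+l+1)*(2* l+4*d+3) * f l m k + g l m k).
  apply: eq_big_nat => k /andP [_ hk].
  rewrite -[k.+1]addn1; apply: pointwise_gen; by rewrite -ltnS.
rewrite !big_split /= -(big_distrr ((d+1)*(m+1))) -(big_distrr (4* l*(l+1))) -(big_distrr (2*(m+l+1)*(2* l+4*d+3))) /= in P.
have T : \sum_(0 <= k < m.+1) g l m k.+1 = \sum_(0 <= k < m.+1) g l m k + g l m (m+1).
  have h1 : \sum_(0 <= i < m.+2) g l m i = g l m 0 + \sum_(0 <= i < m.+1) g l m i.+1.
    by rewrite big_nat_recl.
  have h2 : \sum_(0 <= i < m.+2) g l m i = \sum_(0 <= i < m.+1) g l m i + g l m m.+1.
    by rewrite big_nat_recr.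
  rewrite g0 add0n in h1. by rewrite -h1 h2 addn1.
have LT := last_term l d.
rewrite -/m in LT.
rewrite (@big_nat_recr _ _ _ (m+1) 0) //= mulnDr LT.
rewrite T in P.
rewrite !addn1 in P *.
move: P; natify. lia.
Qed.

Definition F l m := l`! * m`! * \sum_(l <= k < m.+1) f l m k.
Definition Q j n := \prod_(j <= i < j + n) i.

Lemma QR j n : Q j n.+1 = Q j n * (j + n).
Proof. by rewrite /Q addnS big_nat_recr //= leq_addr. Qed.

Lemma QL j n : Q j n.+1 = j * Q j.+1 n.
Proof. by rewrite /Q addnS big_nat_recl ?leq_addr // big_add1 addSn. Qed.

Lemma Q_gt0 j n : 0 < j -> 0 < Q j n.
Proof.
move=> hj; rewrite /Q big_nat_cond prodn_cond_gt0 // => i /andP [/andP [hi _] _].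
exact: leq_trans hj hi.
Qed.

Lemma Frec l d :
  (d+1) * F l (l+d+1) + 4* l * F (l+1) (l+d) = 2*(l+d+l+1)*(2* l+4*d+3) * F l (l+d).
Proof.
rewrite /F (@S_eq l (l+d+1)); last by nlia.
rewrite (@S_eq (l+1) (l+d)); last by nlia.
rewrite (@S_eq l (l+d)); last by nlia.
have -> : (l+d+1)`! = (l+d+1)*(l+d)`! by rewrite addn1 factS.
have -> : (l+1)`! = (l+1)* l`! by rewrite addn1 factS.
transitivity (l`! * (l+d)`! * ((d+1)*(l+d+1)* \sum_(0 <= k < (l+d+1).+1) f l (l+d+1) k
  + 4* l*(l+1)* \sum_(0 <= k < (l+d).+1) f (l+1) (l+d) k)).
  by natify; ring.
rewrite Srec; natify; ring.
Qed.

Lemma Fbase l : F l (l+0) = 2^(l+0) * Q 1 (2* l) * 1.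
Proof.
rewrite !addn0 /F big_nat1 /f !subnn bin0 binn !muln1.
rewrite /Q add1n -fact_prod mul2n -addnn.
rewrite -(@bin_fact (l+l) l) ?leq_addr // addKn.
by natify; ring.
Qed.

Lemma Fzero l : F (l+1) l = 0.
Proof. by rewrite /F big_geq ?muln0 // addn1. Qed.

Lemma Fodd n : forall d, d <= n -> forall l, exists b, odd b /\ F l (l+d) = 2^(l+d) * Q (d+1) (2* l) * b.
Proof.
elim: n => [|n IH] d hd l.
  move: hd; rewrite leqn0 => /eqP ->; exists 1; split => //; exact: Fbase.
case: d hd => [|d] hd.
  exists 1; split => //; exact: Fbase.
rewrite ltnS in hd.
have [b1 [ob1 E1]] := IH d hd l.
have [b2 E2] : exists b2, F (l+1) (l+d) = 2^(l+d) * Q (d+1) (2* l) * (2* l+d+1) * d * b2.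
  case: d hd E1 => [|d'] hd E1.
    by exists 0; rewrite addn0 Fzero !muln0.
  have [b2 [_ E2]] := IH d' (leq_trans (leqnSn d') hd) (l+1).
  exists b2.
  have -> : l + d'.+1 = l + 1 + d' by natify; lia.
  rewrite E2.
  have -> : 2 * (l+1) = (2* l).+1.+1 by natify; lia.
  rewrite QL QR.
  have -> : (d'+1).+1 = d'.+1 + 1 by rewrite !addn1.
  natify; ring.
have FR := Frec l d.
rewrite E1 E2 in FR.
set K := 2^(l+d) * 2 * (2* l+d+1) * Q (d+1) (2* l).
have Kpos : 0 < K.
  by rewrite /K !muln_gt0 expn_gt0 /= Q_gt0 // addn1.
set x := 2 * l * d * b2.
set y := (2* l+4*d+3) * b1.
have FR' : (d+1) * F l (l+d+1) + K * x = K * y.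
  have e1 : K * x = 4 * l * (2^(l+d) * Q (d+1) (2 * l) * (2 * l+d+1) * d * b2).
    by rewrite /K /x; natify; ring.
  have e2 : K * y = 2*(l+d+l+1)*(2 * l+4*d+3)*(2^(l+d) * Q (d+1) (2 * l) * b1).
    by rewrite /K /y; natify; ring.
  by rewrite e1 e2.
have hxy : x <= y.
  by rewrite -(leq_pmul2l Kpos) -FR' leq_addl.
have FR2 : (d+1) * F l (l+d+1) = K * (y - x).
  by rewrite mulnBr -FR' addnK.
exists (y - x); split.
  have oy : odd y by rewrite /y (oddM (2 * l+4*d+3) b1) ob1 andbT (oddD (2 * l+4*d) 3) (oddD (2 * l) (4*d)) (oddM 2 l) (oddM 4 d).
  have ox : odd x = false by rewrite /x (oddM (2 * l * d) b2) (oddM (2 * l) d) (oddM 2 l).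
  have e : y = (y - x) + x by rewrite subnK.
  by move: oy; rewrite {1}e (oddD (y-x) x) ox addbF.
have -> : l + d.+1 = l + d + 1 by rewrite addnS addn1.
apply: (@mulcan (d+1)); first by rewrite addn1.
rewrite FR2 /K.
have QQ : Q (d+1) (2* l) * (d + 1 + 2 * l) = (d+1) * Q (d.+1+1) (2* l).
  rewrite -QR QL. by rewrite !addn1.
transitivity (2 ^ (l+d) * 2 * (y-x) * (Q (d+1) (2* l) * (d + 1 + 2 * l))).
  by natify; ring.
rewrite QQ (expnD 2 (l+d) 1) expn1; natify; ring.
Qed.

Lemma nu2_nat (n : nat) : nu2 (n%:R) = Posz (logn 2 n).
Proof.
rewrite /nu2 pmulrn numq_int denq_int /=.
by rewrite logn1 GRing.subr0.
Qed.

Lemma logn2_pow a v : 0 < v -> logn 2 (2^a * v) = a + logn 2 v.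
Proof.
move=> v0; by rewrite lognM ?expn_gt0 // lognX logn_prime // eqxx muln1.
Qed.

Lemma logn2_odd v : odd v -> logn 2 v = 0.
Proof. by move=> ov; rewrite logn_coprime // coprime2n. Qed.

Lemma A_val l d : exists b, odd b /\ A l (l+d) = (((2^l * Q (d+1) (2 * l) * b)%N)%:R)%R.
Proof.
have [b [ob E]] := @Fodd d d (leqnn d) l.
exists b; split => //.
have eN : F l (l+d) = muln (2 ^ d) (2 ^ l * Q (d+1) (2 * l) * b) by rewrite E expnD; natify; ring.
have -> : A l (l+d) = ((F l (l+d))%:R / (2^(l+d-l))%:R)%R by [].
rewrite eN addKn.
rewrite GRing.natrM GRing.mulrAC GRing.mulfV ?GRing.mul1r //.
by rewrite Num.Theory.pnatr_eq0 expn_eq0.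
Qed.

Lemma decomp x : 0 < x -> exists u, odd u /\ x = 2 ^ logn 2 x * u.
Proof.
move=> x0; have [u cu E] := pfactor_coprime (isT : prime 2) x0.
by exists u; split; [rewrite -coprime2n | rewrite mulnC].
Qed.

Lemma logn2_lt x y : 0 < x -> 0 < y -> logn 2 x < logn 2 y -> logn 2 (x + y) = logn 2 x.
Proof.
move=> x0 y0 hlt.
have [u [ou Eu]] := @decomp x x0.
have [w [ow Ew]] := @decomp y y0.
set a := logn 2 x in Eu hlt *.
set b := logn 2 y in Ew hlt.
have -> : x + y = 2 ^ a * (u + 2 ^ (b - a) * w).
  rewrite {1}Eu {1}Ew -{1}(subnKC (ltnW hlt)) expnD; natify; ring.
rewrite logn2_pow; last by rewrite addn_gt0 (odd_gt0 ou).
rewrite logn2_odd ?addn0 //.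
rewrite (oddD u) ou (oddM (2 ^ (b - a)) w).
by rewrite oddX subn_eq0 leqNgt hlt.
Qed.

Lemma logn2_eq x y : 0 < x -> 0 < y -> logn 2 x = logn 2 y -> logn 2 x < logn 2 (x + y).
Proof.
move=> x0 y0 heq.
have [u [ou Eu]] := @decomp x x0.
have [w [ow Ew]] := @decomp y y0.
have -> : x + y = 2 ^ logn 2 x * (u + w) by rewrite {1}Eu {1}Ew -heq mulnDr.
have uw0 : 0 < u + w by rewrite addn_gt0 (odd_gt0 ou).
rewrite logn2_pow // -{1}(addn0 (logn 2 x)) ltn_add2l.
rewrite -(@pfactor_dvdn 2 1 (u+w)) // expn1 dvdn2.
by rewrite (oddD u) ou ow.
Qed.

Section Main.
Variables (l : nat).
Hypothesis hl : 0 < l.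

Definition V j := logn 2 (Q j (2 * l)).
Definition sblk := 2 ^ (1 + logn 2 l).

Lemma log2l : logn 2 (2 * l) = (logn 2 l).+1.
Proof. by have := @logn2_pow 1 l hl; rewrite expn1 add1n. Qed.

Lemma V_step j : 0 < j -> (V j.+1 == V j) = ~~ (sblk %| j).
Proof.
move=> j0.
have H : V j.+1 + logn 2 j = V j + logn 2 (j + 2 * l).
  rewrite /V -!lognM ?Q_gt0 ?addn_gt0 ?j0 //.
  by rewrite -QR QL mulnC.
have l2 : 0 < 2 * l by rewrite muln_gt0.
rewrite (_ : (V j.+1 == V j) = (logn 2 (j + 2 * l) == logn 2 j)); last first.
  by apply/eqP/eqP => h; move: H h; natify; lia.
rewrite /sblk pfactor_dvdn // add1n.
case: (ltngtP (logn 2 j) (logn 2 (2 * l))) => h.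
- by rewrite logn2_lt // eqxx -ltnNge -log2l.
- rewrite addnC logn2_lt // -log2l.
  by rewrite (ltn_eqF h) (ltnW h).
- have := @logn2_eq j (2 * l) j0 l2 h.
  move=> h2.
  by rewrite (gtn_eqF h2) h log2l leqnn.
Qed.

Lemma a_val j : 0 < j -> nu2 (A l (l + j - 1)) = Posz (l + V j).
Proof.
case: j => [//|d] _.
have -> : l + d.+1 - 1 = l + d by rewrite addnS subn1.
have [b [ob ->]] := A_val l d.
rewrite nu2_nat -mulnA logn2_pow; last by rewrite muln_gt0 Q_gt0 ?addn1 // odd_gt0.
have q0 : 0 < Q (d + 1) (2 * l) by apply: Q_gt0; rewrite addn1.
have eq : logn 2 (Q (d + 1) (2 * l) * b) = V d.+1.
  by rewrite lognM // ?odd_gt0 // (logn2_odd b ob) addn0 /V addn1.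
by rewrite eq.
Qed.

Lemma sblk_ge2 : 2 <= sblk.
Proof. by rewrite /sblk add1n expnS leq_pmulr // expn_gt0. Qed.

Lemma blk t k : k < sblk -> V (sblk * t + 1 + k) = V (sblk * t + 1).
Proof.
elim: k => [|k IH] hk; first by rewrite addn0.
rewrite -IH; last exact: ltnW.
apply/eqP; rewrite addnS V_step; last by rewrite addnAC addn1.
rewrite -addnA dvdn_addr; last exact: dvdn_mulr.
by rewrite add1n gtnNdvd.
Qed.

End Main.

Theorem mainTheorem11 (l : nat) (hl : (1 <= l)%N) :
  s_simple (fun j : nat => nu2 (A l (l + j - 1))) (2 ^ (1 + logn 2 l)).
Proof.
have hs := sblk_ge2 l.
rewrite -/(sblk l).
split.
  split => // t j /andP [j1 js] /=.
  have p1 : 0 < sblk l * t + j by rewrite addn_gt0 j1 orbT.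
  have p2 : 0 < sblk l * t + 1 by rewrite addn1.
  rewrite !a_val //.
  have -> : sblk l * t + j = sblk l * t + 1 + (j - 1) by rewrite -addnA subnKC.
  rewrite blk //.
  by rewrite -(leq_add2r 1) !addn1 subn1 prednK.
move=> s' [hs' Hb].
rewrite leqNgt; apply/negP => hlt.
have h1 := Hb 0 (sblk l).
have h2 := Hb 0 (sblk l).+1.
rewrite muln0 !add0n /= in h1 h2.
have e : nu2 (A l (l + (sblk l).+1 - 1)) = nu2 (A l (l + sblk l - 1)).
  have c1 : 0 < sblk l <= s' by rewrite (ltnW hlt) (ltnW hs).
  by rewrite h2 // h1.
rewrite !a_val // ?(leq_trans _ hs) // in e.
case: e => /eqP; rewrite eqn_add2l V_step //; last by rewrite (leq_trans _ hs).
by rewrite dvdnn.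
Qed.
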